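(* Let $0<\rho_-<\rho_+<1$, $\varphi_\pm=\log\frac{\rho_\pm}{1-\rho_\pm}$ and $\varphi_0=\max\{|\varphi_-|,|\varphi_+|\}$. Then the bottom and the top of the energy band of the competitive TASEP are $$E^-_{+\infty}=-\bar V^+-\log(1+e^{\varphi_0}),$$ $$E^+_{+\infty}=-\bar V^+ +\begin{cases}\dfrac{\varphi_-\log(1+e^{\varphi_+})-\varphi_+\log(1+e^{\varphi_-})}{\varphi_+-\varphi_-}, & \rho_-\le \tfrac12\le \rho_+,\\[2mm] -\log(1+e^{\varphi_+}), & \rho_-<\rho_+\le \tfrac12,\\[1mm] -\log(1+e^{-\varphi_-}), & \tfrac12\le \rho_-<\rho_+.\end{cases}$$
   Context: Let $s(\theta)=\theta\log\theta+(1-\theta)\log(1-\theta)$ for $\theta\in[0,1]$ (with $0\log 0=0$) and $\chi(\rho)=\rho(1-\rho)$. Let $\mathcal M$ be the set of measurable functions $\rho:[-1,1]\to[0,1]$ (a subset of $L^\infty([-1,1])$ with the weak-$*$ topology). For $\rho\in\mathcal M$ let $\mathbb S(\rho)=-\frac12\int_{-1}^1 s(\rho(x))\,dx$, and for a measurable $\varphi:[-1,1]\to\mathbb R$ let $\mathcal H(\rho,\varphi)=\frac12\int_{-1}^1\big[(1-\rho(x))\varphi(x)-\log(1+e^{\varphi(x)})\big]dx$. Let $\Phi=\{\varphi_y=\varphi_-\mathbf 1_{[-1,y)}+\varphi_+\mathbf 1_{[y,1]}:\ y\in[-1,1]\}$. Set $\bar V^+=\log\big(\min_{\rho\in[\rho_-,\rho_+]}\chi(\rho)\big)$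 and define the quasi-potential of the competitive TASEP by $V^+(\rho)=-\mathbb S(\rho)+\inf_{\varphi\in\Phi}\mathcal H(\rho,\varphi)-\bar V^+$. The bottom and top of the energy band are $E^-_{+\infty}=\inf_{\rho\in\mathcal M}\{\mathbb S(\rho)+V^+(\rho)\}$ and $E^+_{+\infty}=\sup_{\rho\in\mathcal M}\{\mathbb S(\rho)+V^+(\rho)\}$. *)

(* Defs.v *)
From HB Require Import structures.
From mathcomp Require Import all_boot all_order all_algebra.
From mathcomp Require Import all_classical all_reals all_analysis.
Set Implicit Arguments. Unset Strict Implicit. Unset Printing Implicit Defensive.
Import Order.TTheory GRing.Theory Num.Theory.
Import numFieldNormedType.Exports.
Local Open Scope classical_set_scope.
Local Open Scope ring_scope.

Section CompetitiveTASEP.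
Variable R : realType.

Definition I11 : set R := `[(-1)%R, 1%R].

Definition xlogx (t : R) : R := if t == 0 then 0 else t * ln t.

Definition s_ent (t : R) : R := xlogx t + xlogx (1 - t).

Definition chi (r : R) : R := r * (1 - r).

Definition Mset : set (R -> R) :=
  [set rho : R -> R | measurable_fun I11 rho /\ (forall x, I11 x -> 0 <= rho x <= 1)].

Definition S_ent (rho : R -> R) : R :=
  - (1 / 2) * Rintegral lebesgue_measure I11 (fun x => s_ent (rho x)).

Definition H_fun (rho phi : R -> R) : R :=
  (1 / 2) * Rintegral lebesgue_measure I11
    (fun x => (1 - rho x) * phi x - ln (1 + expR (phi x))).

Definition phi_of (r : R) : R := ln (r / (1 - r)).

Definition phi_y (rm rp y : R) : R -> R :=
  fun x => if x < y then phi_of rm else phi_of rp.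

Definition Vbar (rm rp : R) : R :=
  ln (inf [set chi r | r in `[rm, rp]]).

Definition Vplus (rm rp : R) (rho : R -> R) : R :=
  - S_ent rho + inf [set H_fun rho (phi_y rm rp y) | y in I11] - Vbar rm rp.

Definition E_minus (rm rp : R) : R :=
  inf [set S_ent rho + Vplus rm rp rho | rho in Mset].
Definition E_plus (rm rp : R) : R :=
  sup [set S_ent rho + Vplus rm rp rho | rho in Mset].

End CompetitiveTASEP.

(* Submission.v *)
Require Import Defs.
From HB Require Import structures.
From mathcomp Require Import all_boot all_order all_algebra.
From mathcomp Require Import all_classical all_reals all_analysis.
From mathcomp Require Import ring lra.
From mathcomp Require Import measurable_realfun.
Import Order.TTheory GRing.Theory Num.Theory.
Import numFieldNormedType.Exports.
Local Open Scope classical_set_scope.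
Local Open Scope ring_scope.

Section Aux.
Variable R : realType.
Notation mu := (@lebesgue_measure R).
Notation II := (@I11 R).

Lemma mI11 : @measurable _ (measurableTypeR R) II.
Proof. exact: measurable_itv. Qed.

Lemma mI11' : measurable II.
Proof. exact: measurable_itv. Qed.

Lemma mbridge (D : set R) (f : R -> R) : measurable_fun D f ->
  @measurable_fun _ _ (measurableTypeR R) R D f.
Proof. move=> h; exact: h. Qed.

Lemma muI11 : mu (II) = 2%:E.
Proof.
rewrite /I11 lebesgue_measure_itv /= ifT; last by rewrite lte_fin; lra.
by rewrite -EFinB; congr EFin; lra.
Qed.

Lemma int_bnd (f : R -> R) (M : R) : measurable_fun II f ->
  (forall x, II x -> `|f x| <= M) -> mu.-integrable II (EFin \o f).
Proof.
move=> /mbridge mf hM; apply: measurable_bounded_integrable => //.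
- exact: mI11.
- rewrite [X in (X < _)%E]muI11; exact: ltry.
- exists M; split; first exact: num_real.
  move=> r Mr x Ix /=; apply: (le_trans (hM x Ix)); exact: ltW.
Qed.

Lemma Rint_cst (c : R) : Rintegral mu II (fun=> c) = c * 2.
Proof.
rewrite Rintegral_cst; last exact: mI11.
by rewrite /= [X in fine X]muI11.
Qed.

Lemma Rint_lb (f : R -> R) (c : R) : mu.-integrable II (EFin \o f) ->
  (forall x, II x -> c <= f x) -> c * 2 <= Rintegral mu II f.
Proof.
move=> If hc; rewrite -Rint_cst; apply: le_Rintegral => //.
- exact: mI11.
- by apply: (@int_bnd _ `|c|) => //; exact: measurable_cst.
Qed.

Lemma Rint_ub (f : R -> R) (c : R) : mu.-integrable II (EFin \o f) ->
  (forall x, II x -> f x <= c) -> Rintegral mu II f <= c * 2.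
Proof.
move=> If hc; rewrite -Rint_cst; apply: le_Rintegral => //.
- exact: mI11.
- by apply: (@int_bnd _ `|c|) => //; exact: measurable_cst.
Qed.


Lemma Rint_half_open (F G : R -> R) :
  mu.-integrable II (EFin \o F) -> mu.-integrable II (EFin \o G) ->
  (forall x, -1 <= x -> x < 1 -> F x = G x) ->
  Rintegral mu II F = Rintegral mu II G.
Proof.
move=> IF IG hFG.
have sub : `[(-1 : R), 1[ `<=` II.
  move=> x; rewrite /I11 /= !in_itv /= => /andP[h1 h2].
  by rewrite h1 /= ltW.
have mJ : measurable `[(-1 : R), 1[ by exact: measurable_itv.
rewrite /I11 -(Rintegral_itv_bndo_bndc (integrableS mI11 mJ sub IF)).
rewrite -(Rintegral_itv_bndo_bndc (integrableS mI11 mJ sub IG)).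
apply: eq_Rintegral => x; rewrite inE /= in_itv /= => /andP[h1 h2].
exact: hFG.
Qed.

Definition L (t : R) := ln (1 + expR t).

Lemma L_le x y : x <= y -> L x <= L y.
Proof.
move=> xy; rewrite /L ler_ln ?posrE ?addr_gt0 ?expR_gt0 //.
by rewrite lerD2l ler_expR.
Qed.

Lemma L_N t : L t = t + L (- t).
Proof.
rewrite /L -{2}(expRK t) -lnM ?posrE ?addr_gt0 ?expR_gt0 //.
by rewrite mulrDr mulr1 expRxMexpNx_1 addrC.
Qed.


Lemma phi_y_meas a b y : measurable_fun II (phi_y a b y).
Proof.
rewrite /phi_y; apply: measurable_fun_if => //.
- exact: mI11'.
- by apply: measurable_fun_ltr; [exact: measurable_id | exact: measurable_cst].
Qed.

Lemma integrand_meas (rho phi : R -> R) :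
  measurable_fun II rho -> measurable_fun II phi ->
  measurable_fun II (fun x => (1 - rho x) * phi x - ln (1 + expR (phi x))).
Proof.
move=> mr mp.
apply: (@measurable_funB _ _ _ _ (fun x => (1 - rho x) * phi x)
   (fun x => ln (1 + expR (phi x)))).
- apply: (@measurable_funM _ _ _ _ (fun x => 1 - rho x) phi) => //.
  by apply: (@measurable_funB _ _ _ _ (fun=> 1) rho) => //; exact: measurable_cst.
- change (measurable_fun II (@ln R \o (fun x => 1 + expR (phi x)))).
  apply: measurableT_comp; first exact: measurable_ln.
  apply: (@measurable_funD _ _ _ _ (fun=> 1) (fun x => expR (phi x))).
    exact: measurable_cst.
  change (measurable_fun II (expR \o phi)).
  by apply: measurableT_comp; first exact: measurable_expR.
Qed.


Lemma pt_bound (r p : R) : 0 <= r <= 1 ->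
  `|(1 - r) * p - ln (1 + expR p)| <= `|p| + `|ln (1 + expR p)|.
Proof.
case/andP=> r0 r1.
apply: (le_trans (ler_normB _ _)); rewrite lerD2r normrM.
rewrite ger0_norm; last lra.
apply: ler_piMl; [exact: normr_ge0 | lra].
Qed.

Lemma integrand_int (rho : R -> R) (a b y : R) : Mset rho ->
  mu.-integrable II (EFin \o (fun x => (1 - rho x) * phi_y a b y x
                                        - ln (1 + expR (phi_y a b y x)))).
Proof.
case=> mr hr.
apply: (@int_bnd _ (`|phi_of a| + `|ln (1 + expR (phi_of a))|
                    + (`|phi_of b| + `|ln (1 + expR (phi_of b))|))).
  by apply: integrand_meas => //; exact: phi_y_meas.
move=> x Ix /=; apply: (le_trans (@pt_bound (rho x) _ (hr x Ix))).
rewrite /phi_y; case: ifP => _.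
- by rewrite lerDl addr_ge0.
- by rewrite lerDr addr_ge0.
Qed.

Lemma oneminus_int (rho : R -> R) : Mset rho ->
  mu.-integrable II (EFin \o (fun x => 1 - rho x)).
Proof.
case=> mr hr; apply: (@int_bnd _ 1).
  by apply: (@measurable_funB _ _ _ _ (fun=> 1) rho) => //; exact: measurable_cst.
move=> x Ix; have /andP[h0 h1] := hr x Ix; rewrite ger0_norm; lra.
Qed.


Lemma scaled_int (rho : R -> R) (c : R) : Mset rho ->
  mu.-integrable II (EFin \o (fun x => (1 - rho x) * c)).
Proof.
move=> Mr.
  case: Mr => mr hr; apply: (@int_bnd _ `|c|).
    apply: (@measurable_funM _ _ _ _ (fun x => 1 - rho x) (fun=> c)).
      by apply: (@measurable_funB _ _ _ _ (fun=> 1) rho) => //; exact: measurable_cst.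
    exact: measurable_cst.
  move=> x Ix /=; have /andP[h0 h1] := hr x Ix.
  rewrite normrM ger0_norm; last lra.
  apply: ler_piMl; [exact: normr_ge0 | lra].
Qed.

Definition mm (rho : R -> R) := (1 / 2) * Rintegral mu II (fun x => 1 - rho x).

Lemma lin_comp (rho : R -> R) (c : R) : Mset rho ->
  (1 / 2) * Rintegral mu II (fun x => (1 - rho x) * c - L c) = mm rho * c - L c.
Proof.
move=> Mr.
have I1 := oneminus_int _ Mr.
have I2 := scaled_int _ c Mr.
have I3 : mu.-integrable II (EFin \o (fun=> L c)).
  by apply: (@int_bnd _ `|L c|) => //; exact: measurable_cst.
rewrite (@RintegralB _ _ _ mu II (fun x => (1 - rho x) * c) (fun=> L c)) //;
  last exact: mI11.
rewrite (@RintegralZr _ _ _ mu II (fun x => 1 - rho x)) //; last exact: mI11.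
rewrite Rint_cst /mm.
by field.
Qed.

End Aux.

Section S.
Variable R : realType.
Notation mu := (@lebesgue_measure R).
Notation II := (@I11 R).
Notation L := (@L R).
Notation mm := (@mm R).

Lemma H_m1 (rho : R -> R) a b : Mset rho ->
  H_fun rho (phi_y a b (-1)) = mm rho * phi_of b - L (phi_of b).
Proof.
move=> Mr; rewrite /H_fun -(lin_comp R _ (phi_of b) Mr).
apply: (congr1 (fun t => 1 / 2 * t)).
apply: eq_Rintegral => x; rewrite inE /I11 /= in_itv /= => /andP[h _].
by rewrite /phi_y /Submission.L ltNge h.
Qed.

Lemma G_int (rho : R -> R) (c : R) : Mset rho ->
  mu.-integrable II (EFin \o (fun x => (1 - rho x) * c - L c)).
Proof.
move=> [mr hr]; apply: (@int_bnd R _ (`|c| + `|L c|)).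
  exact: (integrand_meas R rho (fun=> c) mr (measurable_cst _)).
by move=> x Ix /=; exact: (@pt_bound R (rho x) c (hr x Ix)).
Qed.

Lemma H_1 (rho : R -> R) a b : Mset rho ->
  H_fun rho (phi_y a b 1) = mm rho * phi_of a - L (phi_of a).
Proof.
move=> Mr; rewrite /H_fun -(lin_comp R _ (phi_of a) Mr).
apply: (congr1 (fun t => 1 / 2 * t)).
apply: Rint_half_open.
- exact: integrand_int.
- exact: G_int.
- by move=> x h1 h2; rewrite /phi_y h2.
Qed.


Lemma frac_pos (r : R) : 0 < r -> r < 1 -> 0 < r / (1 - r).
Proof. move=> h0 h1; apply: divr_gt0 => //; lra. Qed.

Lemma phi_lt (r1 r2 : R) : 0 < r1 -> r1 < r2 -> r2 < 1 -> phi_of r1 < phi_of r2.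
Proof.
move=> h0 h12 h1; rewrite /phi_of ltr_ln ?posrE ?frac_pos //; try lra.
rewrite ltr_pdivrMr; last lra.
rewrite mulrAC ltr_pdivlMr; last lra.
nra.
Qed.

Lemma phi_le0 (r : R) : 0 < r -> r < 1 -> r <= 1 / 2 -> phi_of r <= 0.
Proof.
move=> h0 h1 h; rewrite /phi_of; apply: ln_le0.
rewrite ler_pdivrMr; last lra.
lra.
Qed.

Lemma phi_ge0 (r : R) : 0 < r -> r < 1 -> 1 / 2 <= r -> 0 <= phi_of r.
Proof.
move=> h0 h1 h; rewrite /phi_of; apply: ln_ge0.
rewrite ler_pdivlMr; last lra.
lra.
Qed.

Lemma ptlow (r p p0 : R) : 0 <= r <= 1 -> `|p| <= p0 ->
  - L p0 <= (1 - r) * p - ln (1 + expR p).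
Proof.
move=> /andP[r0 r1] hp.
have [p0'|pn] := leP 0 p.
- have h1 : L p <= L p0 by apply: L_le; rewrite ger0_norm in hp.
  have h2 : 0 <= (1 - r) * p by apply: mulr_ge0 => //; lra.
  rewrite /Submission.L in h1 *; lra.
- have h1 : L (- p) <= L p0 by apply: L_le; rewrite ltr0_norm in hp.
  have h2 : p <= (1 - r) * p by nra.
  have h3 := L_N R p.
  rewrite /Submission.L in h1 h3 *; lra.
Qed.

Definition hh (rm rp : R) (rho : R -> R) :=
  inf [set H_fun rho (phi_y rm rp y) | y in II].

Definition PW (rm rp : R) (rho : R -> R) (C : R) :=
  forall x, II x -> forall p, p = phi_of rm \/ p = phi_of rp ->
     C <= (1 - rho x) * p - ln (1 + expR p).

Lemma H_lb (rm rp : R) (rho : R -> R) (C y : R) : Mset rho -> PW rm rp rho C ->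
  C <= H_fun rho (phi_y rm rp y).
Proof.
move=> Mr hC; rewrite /H_fun.
have h := @Rint_lb R _ C (integrand_int R rho rm rp y Mr).
have {h} h : C * 2 <= Rintegral mu II (fun x => (1 - rho x) * phi_y rm rp y x
                              - ln (1 + expR (phi_y rm rp y x))).
  apply: h => x Ix /=; apply: hC => //.
  by rewrite /phi_y; case: ifP => _; [left|right].
lra.
Qed.

Lemma low_all (rm rp : R) (rho : R -> R) : Mset rho ->
  PW rm rp rho (- L (Num.max `|phi_of rm| `|phi_of rp|)).
Proof.
move=> [_ hr] x Ix p [->|->]; apply: ptlow; try exact: hr.
- by rewrite le_max lexx.
- by rewrite le_max lexx orbT.
Qed.

Lemma I11m1 : II (-1).
Proof. by rewrite /I11 /= in_itv /=; apply/andP; split; lra. Qed.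

Lemma I11p1 : II 1.
Proof. by rewrite /I11 /= in_itv /=; apply/andP; split; lra. Qed.

Lemma hh_lb (rm rp : R) (rho : R -> R) (C : R) : Mset rho -> PW rm rp rho C ->
  C <= hh rm rp rho.
Proof.
move=> Mr hC; apply: lb_le_inf.
  by exists (H_fun rho (phi_y rm rp (-1))); exists (-1) => //; exact: I11m1.
move=> _ [y Iy <-]; exact: H_lb.
Qed.

Lemma hh_ub (rm rp : R) (rho : R -> R) (y : R) : Mset rho -> II y ->
  hh rm rp rho <= H_fun rho (phi_y rm rp y).
Proof.
move=> Mr Iy; have hl : has_lbound [set H_fun rho (phi_y rm rp y) | y in II].
  exists (- L (Num.max `|phi_of rm| `|phi_of rp|)).
  move=> _ [z Iz <-]; apply: H_lb => //; exact: low_all.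
apply: (ge_inf hl); by exists y.
Qed.

Lemma mm_bounds (rho : R -> R) : Mset rho -> 0 <= mm rho <= 1.
Proof.
move=> Mr; have I1 := oneminus_int R _ Mr; case: (Mr) => _ hr.
have h0 := @Rint_lb R _ 0 I1.
have h1 := @Rint_ub R _ 1 I1.
have {h0} h0 : 0 * 2 <= Rintegral mu II (fun x => 1 - rho x).
  by apply: h0 => x Ix; have := hr x Ix; lra.
have {h1} h1 : Rintegral mu II (fun x => 1 - rho x) <= 1 * 2.
  by apply: h1 => x Ix; have := hr x Ix; lra.
rewrite /Submission.mm; apply/andP; split; lra.
Qed.

Lemma Mset_cst (c : R) : 0 <= c <= 1 -> Mset (fun=> c).
Proof. by move=> hc; split; [exact: measurable_cst | move=> x _]. Qed.

Lemma SV (rm rp : R) (rho : R -> R) :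
  S_ent rho + Vplus rm rp rho = hh rm rp rho - Vbar rm rp.
Proof. rewrite /Vplus /hh; lra. Qed.


Lemma Eminus_eq (rm rp C : R) : (forall rho, Mset rho -> C <= hh rm rp rho) ->
  (exists rho, Mset rho /\ hh rm rp rho <= C) -> E_minus rm rp = C - Vbar rm rp.
Proof.
move=> hl [r0 [M0 h0]]; rewrite /E_minus.
have lb : lbound [set S_ent rho + Vplus rm rp rho | rho in (@Mset R)] (C - Vbar rm rp).
  by move=> _ [r Mr <-]; rewrite SV; have := hl r Mr; lra.
apply/le_anti/andP; split.
- have h := @ge_inf R _ (ex_intro _ _ lb) (S_ent r0 + Vplus rm rp r0)
     (ex_intro2 _ _ r0 M0 erefl).
  by rewrite SV in h; lra.
- apply: lb_le_inf => //; by exists (S_ent r0 + Vplus rm rp r0); exists r0.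
Qed.

Lemma Eplus_eq (rm rp C : R) : (forall rho, Mset rho -> hh rm rp rho <= C) ->
  (exists rho, Mset rho /\ C <= hh rm rp rho) -> E_plus rm rp = C - Vbar rm rp.
Proof.
move=> hl [r0 [M0 h0]]; rewrite /E_plus.
have ub : ubound [set S_ent rho + Vplus rm rp rho | rho in (@Mset R)] (C - Vbar rm rp).
  by move=> _ [r Mr <-]; rewrite SV; have := hl r Mr; lra.
apply/le_anti/andP; split.
- apply: ge_sup => //; by exists (S_ent r0 + Vplus rm rp r0); exists r0.
- have h := @ub_le_sup R _ (ex_intro _ _ ub) (S_ent r0 + Vplus rm rp r0)
     (ex_intro2 _ _ r0 M0 erefl).
  by rewrite SV in h; lra.
Qed.

Lemma mm_cst (c : R) : mm (fun=> c) = 1 - c.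
Proof. by rewrite /Submission.mm /= Rint_cst; field. Qed.

Lemma wit_val (p : R) : (1 - (if 0 <= p then 1 else 0)) * p - L p = - L `|p|.
Proof.
case: ifP => hp.
- by rewrite ger0_norm // subrr mul0r sub0r.
- rewrite ltr0_norm; last by rewrite ltNge hp.
  rewrite subr0 mul1r (L_N R p); lra.
Qed.

Lemma cst01 (p : R) : 0 <= (if 0 <= p then 1 else 0 : R) <= 1.
Proof. by case: ifP => _; apply/andP; split. Qed.


Lemma main_sec (rm rp : R)
  (h0 : 0 < rm) (hmp : rm < rp) (h1 : rp < 1) :
  let phim := phi_of rm in
  let phip := phi_of rp in
  let phi0 := Num.max `|phim| `|phip| in
  E_minus rm rp = - Vbar rm rp - ln (1 + expR phi0) /\
  (rm <= 1 / 2 <= rp ->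
     E_plus rm rp = - Vbar rm rp +
       (phim * ln (1 + expR phip) - phip * ln (1 + expR phim)) / (phip - phim)) /\
  (rp <= 1 / 2 ->
     E_plus rm rp = - Vbar rm rp - ln (1 + expR phip)) /\
  (1 / 2 <= rm ->
     E_plus rm rp = - Vbar rm rp - ln (1 + expR (- phim))).
Proof.
move=> phim phip phi0; rewrite {}/phi0 {}/phim {}/phip.
set a := phi_of rm; set b := phi_of rp.
have hab : a < b by apply: phi_lt => //; lra.
have ubm1 rho : Mset rho -> hh rm rp rho <= mm rho * b - L b.
  by move=> Mr; have := @hh_ub rm rp rho (-1) Mr I11m1; rewrite H_m1.
have ubp1 rho : Mset rho -> hh rm rp rho <= mm rho * a - L a.
  by move=> Mr; have := @hh_ub rm rp rho 1 Mr I11p1; rewrite H_1.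
split.
  rewrite (@Eminus_eq rm rp (- L (Num.max `|a| `|b|))); first by rewrite /Submission.L; lra.
    by move=> rho Mr; apply: hh_lb => //; exact: low_all.
  have [hle|hlt] := leP `|a| `|b|.
  - exists (fun=> if 0 <= b then 1 else 0); split; first exact/Mset_cst/cst01.
    apply: (le_trans (ubm1 _ (Mset_cst _ (cst01 b)))).
    rewrite mm_cst wit_val lerN2; apply: L_le.
    exact: lexx.
  - exists (fun=> if 0 <= a then 1 else 0); split; first exact/Mset_cst/cst01.
    apply: (le_trans (ubp1 _ (Mset_cst _ (cst01 a)))).
    rewrite mm_cst wit_val lerN2; apply: L_le.
    exact: lexx.
split.
  move=> /andP[hm hp].
  have a0 : a <= 0 by apply: phi_le0 => //; lra.
  have b0 : 0 <= b by apply: phi_ge0 => //; lra.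
  have ba : 0 < b - a by lra.
  set C := (a * ln (1 + expR b) - b * ln (1 + expR a)) / (b - a).
  rewrite (@Eplus_eq rm rp C); first lra.
    move=> rho Mr; have h1' := ubm1 _ Mr; have h2' := ubp1 _ Mr.
    have := mm_bounds _ Mr; rewrite /Submission.L in h1' h2' => /andP[m0 m1].
    rewrite /C ler_pdivlMr //; nra.
  set ms := (L b - L a) / (b - a).
  have hLab : L a <= L b by apply: L_le; exact: ltW.
  have hLab' : L (- b) <= L (- a) by apply: L_le; lra.
  have eNa := L_N R a; have eNb := L_N R b.
  have ms0 : 0 <= ms by apply: divr_ge0; lra.
  have ms1 : ms <= 1 by rewrite /ms ler_pdivrMr //; lra.
  have Mc : Mset (fun=> 1 - ms) by apply: Mset_cst; apply/andP; split; lra.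
  exists (fun=> 1 - ms); split => //.
  apply: hh_lb => // x _ p hpab.
  have e : 1 - (1 - ms) = ms by ring.
  rewrite /= e; case: hpab => ->.
  - rewrite le_eqVlt; apply/orP; left; apply/eqP; rewrite /C /ms /Submission.L.
    rewrite -/a -/b; field; rewrite subr_eq0; apply/negP => /eqP h; lra.
  - rewrite le_eqVlt; apply/orP; left; apply/eqP; rewrite /C /ms /Submission.L.
    rewrite -/a -/b; field; rewrite subr_eq0; apply/negP => /eqP h; lra.
split.
  move=> hp.
  have b0 : b <= 0 by apply: phi_le0 => //; lra.
  rewrite (@Eplus_eq rm rp (- L b)); first by rewrite /Submission.L; lra.
    move=> rho Mr; have h1' := ubm1 _ Mr.
    have := mm_bounds _ Mr => /andP[m0 m1]; nra.
  exists (fun=> 1); split; first by apply: Mset_cst; apply/andP; split.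
  apply: hh_lb; first by apply: Mset_cst; apply/andP; split.
  move=> x _ p hpab; rewrite /= subrr mul0r sub0r lerN2.
  by apply: L_le; case: hpab => ->; [exact: ltW|].
move=> hm.
have a0 : 0 <= a by apply: phi_ge0 => //; lra.
rewrite (@Eplus_eq rm rp (- L (- a))); first by rewrite /Submission.L; lra.
  move=> rho Mr; have h2' := ubp1 _ Mr.
  have eNa := L_N R a.
  have := mm_bounds _ Mr => /andP[m0 m1]; nra.
exists (fun=> 0); split; first by apply: Mset_cst; apply/andP; split.
apply: hh_lb; first by apply: Mset_cst; apply/andP; split.
move=> x _ p hpab; rewrite /= subr0 mul1r.
have eNp := L_N R p; rewrite /Submission.L in eNp.
have : L (- p) <= L (- a).
  by apply: L_le; case: hpab => ->; rewrite -/a -/b; lra.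
rewrite /Submission.L; lra.
Qed.

End S.
Theorem proposition2p1 (R : realType) (rm rp : R)
  (h0 : 0 < rm) (hmp : rm < rp) (h1 : rp < 1) :
  let phim := phi_of rm in
  let phip := phi_of rp in
  let phi0 := Num.max `|phim| `|phip| in
  E_minus rm rp = - Vbar rm rp - ln (1 + expR phi0) /\
  (rm <= 1 / 2 <= rp ->
     E_plus rm rp = - Vbar rm rp +
       (phim * ln (1 + expR phip) - phip * ln (1 + expR phim)) / (phip - phim)) /\
  (rp <= 1 / 2 ->
     E_plus rm rp = - Vbar rm rp - ln (1 + expR phip)) /\
  (1 / 2 <= rm ->
     E_plus rm rp = - Vbar rm rp - ln (1 + expR (- phim))).
Proof. exact: main_sec. Qed.
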